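(* Let $\mathcal{B}$ and $\mathcal{A}_{i_1},\mathcal{A}_{i_1,i_2},\dots,\mathcal{A}_{i_1,\dots,i_m}$ (indices in $\{1,\dots,n\}$) be non-random Hermitian tensors of a common shape, and let $\beta_1,\dots,\beta_n$ be independent symmetric Bernoulli random variables, $\mathrm{Pr}(\beta_i=1)=\mathrm{Pr}(\beta_i=-1)=\frac12$. Then $$\mathrm{Pr}\Big(\Big\|\mathcal{B}+\sum_{j=1}^m\sum_{1\le i_1\neq i_2\neq\cdots\neq i_j\le n}\mathcal{A}_{i_1,\dots,i_j}\beta_{i_1}\cdots\beta_{i_j}\Big\|_{(k)}\ge\|\mathcal{B}\|_{(k)}\Big)\ge C_m,$$ where $C_m$ is a constant depending on $\mathcal{A}_{i_1},\mathcal{A}_{i_1,i_2},\dots,\mathcal{A}_{i_1,\dots,i_m}$ but independent of $\mathcal{B}$.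
   Context: Singular values of a tensor are those of its unfolded matrix (identify multi-indices with single indices by a fixed bijection); $\|\mathcal{T}\|_{(k)}$ is the Ky Fan $k$-norm, the sum of the $k$ largest singular values. The inner sum ranges over indices $i_1,\dots,i_j\in\{1,\dots,n\}$ that are pairwise distinct. *)

(* Defs.v *)
From mathcomp Require Import all_boot all_order all_algebra.
Set Implicit Arguments. Unset Strict Implicit. Unset Printing Implicit Defensive.
Import Order.TTheory GRing.Theory Num.Theory.
Local Open Scope ring_scope.

(* Scalars: any numeric algebraically closed field C (e.g. the complex numbers). *)

Definition midx (N : nat) (dims : 'I_N -> nat) : finType :=
  {dffun forall i : 'I_N, 'I_(dims i)}.

(* A (square) tensor of shape d_0 x ... x d_(N-1) x d_0 x ... x d_(N-1):
   an entry for each pair (row multi-index, column multi-index). *)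
Notation tensor C dims := {ffun midx dims * midx dims -> C}.

Definition hermitian_tensor (C : numClosedFieldType) N (dims : 'I_N -> nat)
  (T : tensor C dims) : Prop :=
  forall x y : midx dims, T (x, y) = (T (y, x))^*.

Definition unfold (C : nzRingType) N (dims : 'I_N -> nat) (T : tensor C dims)
  : 'M[C]_#|midx dims| :=
  \matrix_(i, j) T (enum_val i, enum_val j).

Definition eigenvalues (C : numClosedFieldType) n (M : 'M[C]_n) : seq C :=
  sval (closed_field_poly_normal (char_poly M)).

Definition singular_values (C : numClosedFieldType) n (M : 'M[C]_n) : seq C :=
  sort (fun x y : C => y <= x)
    [seq sqrtC z | z <- eigenvalues ((map_mx Num.conj M)^T *m M)].

Definition kyfan (C : numClosedFieldType) (k : nat) n (M : 'M[C]_n) : C :=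
  \sum_(s <- take k (singular_values M)) s.

Definition tkyfan (C : numClosedFieldType) (k : nat) N (dims : 'I_N -> nat)
  (T : tensor C dims) : C := kyfan k (unfold T).

Definition sgn (C : nzRingType) (b : bool) : C := (-1) ^+ b.

(* A j (for j : 'I_m) is the family of coefficients of degree j.+1. *)
Definition chaos (C : numClosedFieldType) N (dims : 'I_N -> nat) (n m : nat)
  (B : tensor C dims)
  (A : forall j : 'I_m, (j.+1).-tuple 'I_n -> tensor C dims)
  (beta : {ffun 'I_n -> bool}) : tensor C dims :=
  [ffun x => B x + \sum_(j < m) \sum_(t : (j.+1).-tuple 'I_n | uniq t)
        A j t x * \prod_(i <- t) sgn C (beta i)].

(* beta_1..beta_n independent symmetric Bernoulli = uniform distribution on
   {+-1}^n; probability of an event = (number of outcomes) / 2^n. *)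
Definition prob (C : numFieldType) n (E : pred {ffun 'I_n -> bool}) : C :=
  #|E|%:R / (2 ^ n)%:R.

(* Main.v *)
Require Import Defs.
From mathcomp Require Import all_boot all_order all_algebra.
From mathcomp Require Import sesquilinear spectral ring.
Import Order.TTheory GRing.Theory Num.Theory.
Local Open Scope ring_scope.
Set Implicit Arguments. Unset Strict Implicit. Unset Printing Implicit Defensive.

Module T1.
Local Open Scope ring_scope.



Lemma char_poly_sim (R : fieldType) n (A P : 'M[R]_n) : P \in unitmx ->
  char_poly (invmx P *m A *m P) = char_poly A.
Proof.
move=> Pu; rewrite /char_poly /char_poly_mx.
set f := (map_mx (@polyC R)).
have -> : f (invmx P *m A *m P) = f (invmx P) *m f A *m f P by rewrite /f !map_mxM.
have hX : ('X%:M : 'M[{poly R}]_n) = f (invmx P) *m 'X%:M *m f P.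
  by rewrite mul_mx_scalar -scalemxAl -map_mxM mulVmx // map_mx1 scalemx1.
rewrite [X in X - _]hX -mulmxBl -mulmxBr !det_mulmx mulrAC -det_mulmx.
by rewrite /f -map_mxM mulVmx // map_mx1 det1 mul1r.
Qed.
Section S.
Variable C : numClosedFieldType.

Lemma ReD (x y : C) : 'Re (x + y) = 'Re x + 'Re y.
Proof. by rewrite !ReE rmorphD /= -mulrDl addrACA. Qed.
Lemma Re0 : 'Re (0 : C) = 0.
Proof. by rewrite ReE rmorph0 addr0 mul0r. Qed.
Lemma Re_sum I (r : seq I) (P : pred I) (F : I -> C) :
  'Re (\sum_(i <- r | P i) F i) = \sum_(i <- r | P i) 'Re (F i).
Proof. by apply: (big_morph _ ReD Re0). Qed.
Lemma ReN (x : C) : 'Re (- x) = - 'Re x.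
Proof. by rewrite !ReE rmorphN /= -opprD mulNr. Qed.
End S.

End T1.
Import T1.

Module T2.
Local Open Scope ring_scope.
Local Open Scope sesquilinear_scope.

Section S2.
Variable C : numClosedFieldType.
Variable n : nat.

Lemma ctE m p (A : 'M[C]_(m,p)) : (map_mx Num.conj A)^T = A^t*.
Proof. by rewrite map_trmx. Qed.
Lemma ct_mul m p q (A : 'M[C]_(m,p)) (B : 'M[C]_(p,q)) : (A *m B)^t* = B^t* *m A^t*.
Proof. by rewrite trmx_mul map_mxM. Qed.
Lemma ct_diag (d : 'rV[C]_n) : (diag_mx d)^t* = diag_mx (map_mx Num.conj d).
Proof. by rewrite tr_diag_mx map_diag_mx. Qed.

Lemma eig_perm (M P : 'M[C]_n) (d : 'rV[C]_n) : P \is unitarymx ->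
  M = P^t* *m diag_mx d *m P ->
  perm_eq (eigenvalues ((map_mx Num.conj M)^T *m M))
          [seq (d 0 i)^* * d 0 i | i <- enum 'I_n].
Proof.
move=> Pu hM.
have hN : (map_mx Num.conj M)^T *m M =
   invmx P *m (diag_mx (map_mx Num.conj d) *m diag_mx d) *m P.
  rewrite invmx_unitary // hM.
  rewrite ctE !ct_mul trmxCK ct_diag !mulmxA mulmxtVK //.
rewrite /eigenvalues; case: closed_field_poly_normal => r /=.
rewrite hN char_poly_sim ?unitarymx_unit // mulmx_diag.
rewrite (monicP (char_poly_monic _)) scale1r char_poly_trig ?diag_mx_is_trig //.
move=> h; apply: prod_XsubC_eq; rewrite -h big_map big_enum /=.
by apply: eq_bigr => i _; rewrite !mxE eqxx mulr1n.
Qed.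

Definition ge_rel : rel C := fun x y => y <= x.

Lemma kyfan_spec k (M P : 'M[C]_n) (d : 'rV[C]_n) : P \is unitarymx ->
  M = P^t* *m diag_mx d *m P ->
  kyfan k M = \sum_(i <- take k (sort (relpre (fun i => `|d 0 i|) ge_rel) (enum 'I_n)))
                `|d 0 i|.
Proof.
move=> Pu hM; have hp := eig_perm Pu hM.
rewrite /kyfan /singular_values.
set l1 := map _ _.
have hl1 : perm_eq l1 [seq `|d 0 i| | i <- enum 'I_n].
  have h2 := perm_map (fun z : C => sqrtC z) hp; rewrite -map_comp in h2.
  apply: (perm_trans h2); rewrite (eq_map (g := fun i => `|d 0 i|)) //.
  by move=> i /=; rewrite -normCKC sqrCK.
have -> : sort (fun x y : C => y <= x) l1 = sort ge_rel [seq `|d 0 i| | i <- enum 'I_n].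
  apply/perm_sort_inP => //.
  - move=> a b; rewrite !(perm_mem hl1) => /mapP[i _ ->] /mapP[j _ ->].
    by rewrite /ge_rel; apply: real_leVge; apply: normr_real.
  - by move=> a b c _ _ _ hab hbc; apply: le_trans hbc hab.
  - by move=> a b _ _ /andP[h1 h2]; apply/le_anti; rewrite h1 h2.
by rewrite sort_map -map_take big_map.
Qed.
End S2.
Arguments ge_rel {C}.

End T2.
Import T2.

Module T3.
Local Open Scope ring_scope.

Section S3.
Variable C : numClosedFieldType.
Variable I : eqType.
Variables (x c : I -> C).
Hypothesis hc0 : forall i, 0 <= c i.
Hypothesis hc1 : forall i, c i <= 1.

Lemma thr (s : seq I) k t :
  (forall i, i \in take k s -> t <= x i) ->
  (forall i, i \in drop k s -> x i <= t) ->
  \sum_(i <- s) x i * c i <=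
  \sum_(i <- take k s) x i + t * (\sum_(i <- s) c i - (minn k (size s))%:R).
Proof.
elim: s k => [|a s IH] k.
  by move=> _ _; rewrite !big_nil /= minn0 subrr mulr0 addr0.
case: k => [|k] h1 h2.
  rewrite take0 big_nil add0r min0n subr0 !big_cons mulrDr.
  apply: lerD.
    by apply: ler_wpM2r => //; apply: h2; rewrite mem_head.
  have := IH 0%N; rewrite take0 big_nil add0r min0n subr0; apply => //.
  by move=> i; rewrite drop0 => hi; apply: h2; rewrite drop0 in_cons hi orbT.
rewrite /= !big_cons minnSS.
have ha : t <= x a by apply: h1; rewrite mem_head.
have hIH : _ := IH k (fun i hi => h1 i ltac:(by rewrite in_cons hi orbT)) h2.
have h3 : x a * c a <= x a + t * (c a - 1).
  rewrite -subr_ge0.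
  have : 0 <= (x a - t) * (1 - c a) by apply: mulr_ge0; rewrite subr_ge0.
  congr (0 <= _); ring.
apply: le_trans (lerD h3 hIH) _.
rewrite le_eqVlt; apply/orP; left; apply/eqP.
rewrite -addn1 natrD; ring.
Qed.
End S3.

Section S4.
Variable C : numClosedFieldType.
Variable n : nat.

Lemma topk_bound k (x c : 'I_n -> C) : (forall i, 0 <= x i) ->
  (forall i, 0 <= c i) -> (forall i, c i <= 1) -> \sum_i c i <= k%:R ->
  \sum_i x i * c i <= \sum_(i <- take k (sort (relpre x ge_rel) (enum 'I_n))) x i.
Proof.
move=> hx hc0 hc1 hck.
set s := sort _ _.
have ps : perm_eq s (enum 'I_n) by rewrite perm_sort.
set xs := map x s.
have hxs : xs = sort ge_rel (map x (enum 'I_n)) by rewrite sort_map.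
have sxs : sorted ge_rel xs.
  rewrite hxs; apply: (sort_sorted_in (P := Num.real)).
    by move=> a b ha hb; rewrite /ge_rel; apply: real_leVge.
  by apply/allP => _ /mapP[i _ ->]; apply: ger0_real.
have szs : size xs = size s by rewrite size_map.
set t := nth 0 xs k.
have ht0 : 0 <= t.
  rewrite /t; case: (ltnP k (size xs)) => hk; last by rewrite nth_default.
  by have /mapP[i _ ->] := mem_nth 0 hk; apply: hx.
have gtr : transitive (@ge_rel C) by move=> a b c' hab hbc; apply: le_trans hbc hab.
have grf : reflexive (@ge_rel C) by move=> a; apply: lexx.
have hnth : forall p q, (p <= q < size xs)%N -> nth 0 xs q <= nth 0 xs p.
  move=> p q /andP[hpq hq]; apply: (sorted_leq_nth gtr grf 0 sxs) => //.
  by rewrite inE (leq_ltn_trans hpq hq).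
have h1 : forall i, i \in take k s -> t <= x i.
  move=> i hi; rewrite /t; case: (ltnP k (size xs)) => hk; last by rewrite nth_default.
  set p := index i (take k s).
  have hp : (p < k)%N.
    by move: hi; rewrite -index_mem size_take -szs hk.
  have -> : x i = nth 0 xs p.
    by rewrite /xs (nth_map i) -?szs ?(ltn_trans hp) // -(nth_take i hp) nth_index.
  by apply: hnth; rewrite (ltnW hp) hk.
have h2 : forall i, i \in drop k s -> x i <= t.
  move=> i hi; set p := index i (drop k s).
  have hp : (k + p < size xs)%N.
    by move: hi; rewrite -index_mem size_drop szs -/p ltn_subRL.
  have -> : x i = nth 0 xs (k + p).
    by rewrite /xs (nth_map i) -?szs // -nth_drop nth_index.
  by apply: hnth; rewrite leq_addr hp.
have := thr hc0 hc1 h1 h2.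
rewrite (perm_big _ ps) /= big_enum /= => h; apply: le_trans h _.
rewrite gerDl (perm_big _ ps) /= big_enum /=.
case: (ltnP k (size xs)) => hk.
  rewrite (minn_idPl (ltnW _)) -?szs //.
  by apply: mulr_ge0_le0 => //; rewrite subr_le0.
by rewrite /t nth_default // mul0r.
Qed.
End S4.

End T3.
Import T3.

Module T4.
Local Open Scope ring_scope.
Local Open Scope sesquilinear_scope.

Section S5.
Variable C : numClosedFieldType.
Variable n : nat.

Lemma gram_entry (a : 'M[C]_n) i j : (a^t* *m a) i j = \sum_l (a l i)^* * a l j.
Proof. by rewrite !mxE; apply: eq_bigr => l _; rewrite !mxE. Qed.

Lemma gram_diag (a : 'M[C]_n) i : (a^t* *m a) i i = \sum_l `|a l i| ^+ 2.
Proof. by rewrite gram_entry; apply: eq_bigr => l _; rewrite normCKC. Qed.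

Lemma gram_sym (a : 'M[C]_n) i j : (a^t* *m a) j i = ((a^t* *m a) i j)^*.
Proof.
rewrite !gram_entry rmorph_sum; apply: eq_bigr => l _.
by rewrite rmorphM /= conjCK mulrC.
Qed.

Lemma col_le1 (a : 'M[C]_n) i : (a^t* *m a) *m (a^t* *m a) = a^t* *m a ->
  \sum_l `|a l i| ^+ 2 <= 1.
Proof.
move=> hE; set E := a^t* *m a in hE *.
set w := \sum_l `|a l i| ^+ 2.
have w0 : 0 <= w by apply: sumr_ge0 => l _; apply: exprn_ge0.
have hw : w = \sum_j `|E i j| ^+ 2.
  rewrite /w -gram_diag -/E -{1}hE mxE; apply: eq_bigr => j _.
  by rewrite /E (gram_sym a i j) normCK.
have hww : w ^+ 2 <= w.
  rewrite {2}hw (bigD1 i) //=.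
  have -> : E i i = w by rewrite /E gram_diag.
  rewrite ger0_norm // lerDl; apply: sumr_ge0 => j _; by rewrite exprn_ge0 ?normr_ge0.


have [->|wn0] := eqVneq w 0; first by apply: ler01.
have wp : 0 < w by rewrite lt_def wn0 w0.
by rewrite -(ler_pM2l wp) mulr1 -expr2.
Qed.

Lemma gram_tr (a : 'M[C]_n) : \sum_i \sum_l `|a l i| ^+ 2 = \tr (a^t* *m a).
Proof. by rewrite /mxtrace; apply: eq_bigr => i _; rewrite gram_diag. Qed.

End S5.

Section S6.
Variable C : numClosedFieldType.
Variable n : nat.

Definition good k (X : 'M[C]_n) :=
  (X^t* *m X) *m (X^t* *m X) = X^t* *m X /\ \tr (X^t* *m X) <= k%:R.

Lemma unitary_tr (P : 'M[C]_n) : P \is unitarymx -> P^t* *m P = 1%:M.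
Proof. by move=> /unitarymxP /mulmx1C. Qed.

Lemma good_mul k (X P : 'M[C]_n) : P \is unitarymx -> good k X -> good k (X *m P^t*).
Proof.
move=> Pu [h1 h2]; have hP := unitary_tr Pu.
have e : (X *m P^t*)^t* *m (X *m P^t*) = P *m (X^t* *m X) *m P^t*.
  by rewrite ct_mul trmxCK !mulmxA.
rewrite /good e; move: h1 h2; set G := X^t* *m X; clearbody G => h1 h2; split.
  by rewrite !mulmxA -[P *m G *m P^t* *m P]mulmxA hP mulmx1 -[P *m G *m G]mulmxA h1.
by rewrite mxtrace_mulC mulmxA hP mul1mx.
Qed.

Lemma amgm (u v : C) : 0 <= u -> 0 <= v -> u * v <= (u ^+ 2 + v ^+ 2) / 2%:R.
Proof.
move=> u0 v0; rewrite ler_pdivlMr ?ltr0n //.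
rewrite -subr_ge0.
have : 0 <= (u - v) ^+ 2 by rewrite -realEsqr realB ?ger0_real.
by congr (0 <= _); ring.
Qed.

Lemma tr_diag_form (a b : 'M[C]_n) (d : 'rV[C]_n) :
  \tr (a *m diag_mx d *m b^t*) = \sum_i d 0 i * \sum_j a j i * (b j i)^*.
Proof.
rewrite mul_mx_diag /mxtrace; under eq_bigr do rewrite mxE.
rewrite exchange_big /=; apply: eq_bigr => i _; rewrite mulr_sumr.
by apply: eq_bigr => j _; rewrite !mxE; ring.
Qed.

Lemma upper k (X Y M P : 'M[C]_n) (d : 'rV[C]_n) : good k X -> good k Y ->
  P \is unitarymx -> M = P^t* *m diag_mx d *m P ->
  'Re (\tr (X *m M *m Y^t*)) <= kyfan k M.
Proof.
move=> gX gY Pu hM; rewrite (kyfan_spec k Pu hM).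
have [ga1 ga2] := good_mul Pu gX; have [gb1 gb2] := good_mul Pu gY.
move: ga1 ga2 gb1 gb2; set a := X *m P^t*; set b := Y *m P^t* => ga1 ga2 gb1 gb2.
have -> : X *m M *m Y^t* = a *m diag_mx d *m b^t*.
  by rewrite hM /a /b ct_mul trmxCK !mulmxA.
rewrite tr_diag_form.
set wa := fun i => \sum_l `|a l i| ^+ 2.
set wb := fun i => \sum_l `|b l i| ^+ 2.
set c := fun i => (wa i + wb i) / 2%:R.
have wa0 : forall i, 0 <= wa i by move=> i; apply: sumr_ge0 => l _; rewrite exprn_ge0.
have wb0 : forall i, 0 <= wb i by move=> i; apply: sumr_ge0 => l _; rewrite exprn_ge0.
have c0 : forall i, 0 <= c i.
  by move=> i; rewrite /c divr_ge0 ?ler0n ?addr_ge0.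
have c1 : forall i, c i <= 1.
  move=> i; rewrite /c ler_pdivrMr ?ltr0n // mul1r -[2%:R]/(1 + 1 : C).
  rewrite /wa /wb /=; apply: lerD; [exact: col_le1 ga1 | exact: col_le1 gb1].
have ck : \sum_i c i <= k%:R.
  rewrite /c -mulr_suml ler_pdivrMr ?ltr0n // big_split /=.
  rewrite -mulr_natr mulr2n mulrDr mulr1.
  by rewrite !mul1r; apply: lerD; rewrite /wa /wb gram_tr.
apply: le_trans (topk_bound (x := fun i => `|d 0 i|) _ c0 c1 ck); last by move=> i.
apply: le_trans (leif_Re_Creal _).1 _.
apply: le_trans (ler_norm_sum _ _ _) _.
apply: ler_sum => i _; rewrite normrM; apply: ler_wpM2l => //.
apply: le_trans (ler_norm_sum _ _ _) _.
rewrite /c /wa /wb -big_split /= mulr_suml; apply: ler_sum => j _.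
rewrite normrM norm_conjC; apply: amgm; apply: normr_ge0.
Qed.

End S6.

End T4.
Import T4.

Module T5.
Local Open Scope ring_scope.
Local Open Scope sesquilinear_scope.

Section S7.
Variable C : numClosedFieldType.
Variable n : nat.

Lemma diag_entry_sum (u v : 'rV[C]_n) i :
  \sum_j (diag_mx u) j i * ((diag_mx v) j i)^* = u 0 i * (v 0 i)^*.
Proof.
rewrite (bigD1 i) //= big1 ?addr0; first by rewrite !mxE eqxx !mulr1n.
by move=> j hj; rewrite !mxE (negbTE hj) !mulr0n mul0r.
Qed.

Lemma sum_ind (r : seq 'I_n) : uniq r -> \sum_i ((i \in r)%:R : C) = (size r)%:R.
Proof.
move=> ur; transitivity (\sum_(i in r) (1 : C)).
  by rewrite [RHS]big_mkcond; apply: eq_bigr => i _; case: (i \in r).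
by rewrite sumr_const (card_uniqP ur).
Qed.

Lemma good_diag k (r : seq 'I_n) (w : 'rV[C]_n) (P : 'M[C]_n) : uniq r ->
  (size r <= k)%N -> P \is unitarymx ->
  (forall i, (w 0 i)^* * w 0 i = (i \in r)%:R) -> good k (diag_mx w *m P).
Proof.
move=> ur sr Pu hw.
set e : 'rV[C]_n := \row_i (i \in r)%:R.
rewrite /good.
have -> : (diag_mx w *m P)^t* *m (diag_mx w *m P) = P^t* *m diag_mx e *m P.
  rewrite ct_mul ct_diag !mulmxA -[P^t* *m _ *m _]mulmxA mulmx_diag.
  congr (_ *m diag_mx _ *m _); apply/rowP => i; rewrite !mxE hw.
  done.
have hPP : P *m P^t* = 1%:M by apply/unitarymxP.
split.
  rewrite !mulmxA -[P^t* *m diag_mx e *m P *m P^t*]mulmxA hPP mulmx1.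
  rewrite -[P^t* *m diag_mx e *m diag_mx e]mulmxA mulmx_diag.
  congr (_ *m diag_mx _ *m _); apply/rowP => i; rewrite !mxE.
  by case: (i \in r); rewrite ?mulr1 ?mulr0.
rewrite mxtrace_mulC mulmxA hPP mul1mx mxtrace_diag.
under eq_bigr do rewrite mxE.
by rewrite sum_ind // ler_nat.
Qed.

Lemma lower k (M P : 'M[C]_n) (d : 'rV[C]_n) : P \is unitarymx ->
  M = P^t* *m diag_mx d *m P ->
  exists X Y, [/\ good k X, good k Y & kyfan k M <= 'Re (\tr (X *m M *m Y^t*))].
Proof.
move=> Pu hM; rewrite (kyfan_spec k Pu hM).
set r := take k _.
have ur : uniq r by apply: take_uniq; rewrite sort_uniq enum_uniq.
have sr : (size r <= k)%N by rewrite size_take_min geq_minl.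
have hPP : P *m P^t* = 1%:M by apply/unitarymxP.
pose sg i := if d 0 i == 0 then 1 else d 0 i / `|d 0 i|.
have sgn1 : forall i, (sg i)^* * sg i = 1.
  move=> i; rewrite /sg; case: eqP => [_|/eqP h]; first by rewrite rmorph1 mulr1.
  rewrite -normCKC normrM normfV normr_id mulfV ?expr1n //.
  by rewrite normr_eq0.
have dsg : forall i, d 0 i * (sg i)^* = `|d 0 i|.
  move=> i; rewrite /sg; case: eqP => [->|/eqP h]; first by rewrite mul0r normr0.
  rewrite rmorphM fmorphV /= (conj_Creal (normr_real _)) mulrA -normCK expr2.
  by rewrite mulfK // normr_eq0.
pose u : 'rV[C]_n := \row_i (i \in r)%:R.
pose v : 'rV[C]_n := \row_i ((i \in r)%:R * sg i).
exists (diag_mx u *m P), (diag_mx v *m P); split.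
- apply: (good_diag (r := r)) => // i; rewrite /u mxE rmorph_nat.
  by case: (i \in r); rewrite ?mulr1 ?mulr0.
- apply: (good_diag (r := r)) => // i; rewrite /v mxE rmorphM rmorph_nat mulrACA sgn1 mulr1.
  by case: (i \in r); rewrite ?mulr1 ?mulr0.
have -> : diag_mx u *m P *m M *m (diag_mx v *m P)^t* =
          (diag_mx u *m P *m P^t*) *m diag_mx d *m (diag_mx v *m P *m P^t*)^t*.
  by rewrite hM !ct_mul trmxCK !mulmxA.
rewrite -[diag_mx u *m P *m P^t*]mulmxA -[diag_mx v *m P *m P^t*]mulmxA hPP !mulmx1 tr_diag_form.
rewrite [X in 'Re X](eq_bigr (fun i => d 0 i * (u 0 i * (v 0 i)^*))); last by move=> i _; rewrite diag_entry_sum.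
rewrite Re_sum (big_uniq _ ur) /= big_mkcond /=.
rewrite le_eqVlt; apply/orP; left; apply/eqP.
apply: eq_bigr => i _; rewrite /u /v !mxE rmorphM rmorph_nat.
case: (i \in r); rewrite ?mul0r ?mulr0 ?Re0 // !mul1r dsg.
by apply/esym/Creal_ReP/normr_real.
Qed.
End S7.

End T5.
Import T5.

Module T6.
Local Open Scope ring_scope.
Local Open Scope sesquilinear_scope.

Section S8.
Variable C : numClosedFieldType.

Lemma spec_form n (M : 'M[C]_n) : M \is hermsymmx ->
  M = (spectralmx M)^t* *m diag_mx (spectral_diag M) *m spectralmx M.
Proof.
move=> /hermitian_normalmx /orthomx_spectralP {1}->.
by rewrite invmx_unitary // spectral_unitarymx.
Qed.

Lemma unfold_herm N (dims : 'I_N -> nat) (T : tensor C dims) :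
  hermitian_tensor T -> unfold T \is hermsymmx.
Proof.
move=> hT; rewrite qualifE expr0 scale1r; apply/eqP/matrixP => i j.
by rewrite !mxE hT.
Qed.

Lemma sgn_neg (b : bool) : sgn C (~~ b) = - sgn C b.
Proof. by case: b; rewrite /sgn /= ?expr0 ?expr1 ?opprK. Qed.

Lemma sgn_conj (b : bool) : (sgn C b)^* = sgn C b.
Proof. by case: b; rewrite /sgn /= ?expr0 ?expr1 ?rmorph1 ?rmorphN1. Qed.

Lemma chaos_herm N (dims : 'I_N -> nat) (n m : nat) (B : tensor C dims)
  (A : forall j : 'I_m, (j.+1).-tuple 'I_n -> tensor C dims) beta :
  hermitian_tensor B -> (forall j t, hermitian_tensor (A j t)) ->
  hermitian_tensor (chaos B A beta).
Proof.
move=> hB hA x y; rewrite !ffunE rmorphD /= -hB rmorph_sum; congr (_ + _).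
apply: eq_bigr => j _; rewrite rmorph_sum; apply: eq_bigr => t _.
rewrite rmorphM /= -hA rmorph_prod; congr (_ * _).
by apply: eq_bigr => i _; rewrite -[RHS]/((sgn C (beta i))^*) sgn_conj.
Qed.

Lemma zero_mean n j (t : (j.+1).-tuple 'I_n) : uniq t ->
  \sum_(beta : {ffun 'I_n -> bool}) \prod_(i <- t) sgn C (beta i) = 0.
Proof.
case: t => [[|i0 s] hs] //= hu.
move: hu => /andP[hi0 _].
pose flip (beta : {ffun 'I_n -> bool}) : {ffun 'I_n -> bool} :=
  [ffun i => if i == i0 then ~~ beta i else beta i].
have flipK : involutive flip.
  move=> beta; apply/ffunP => i; rewrite !ffunE.
  by case: eqP => // _; rewrite negbK.
set S := \sum_beta _.
have hS : S = - S.
  rewrite {1}/S (reindex_inj (inv_inj flipK)) /= -sumrN.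
  apply: eq_bigr => beta _; rewrite !big_cons ffunE eqxx sgn_neg mulNr.
  congr (- (_ * _)); rewrite big_seq [RHS]big_seq; apply: eq_bigr => i hi.
  rewrite ffunE; case: eqP => // ei; by move: hi0; rewrite -ei hi.
have : S *+ 2 == 0 by rewrite mulr2n {1}hS addNr.
by rewrite mulrn_eq0 /= => /eqP.
Qed.

End S8.

End T6.
Import T6.

Module T7.
Local Open Scope ring_scope.
Local Open Scope sesquilinear_scope.

Section S9.
Variable C : numClosedFieldType.
Variables (N : nat) (dims : 'I_N -> nat).

Lemma G_sum (I : finType) (X Y : 'M[C]_#|midx dims|) (T : I -> tensor C dims) :
  \sum_b \tr (X *m unfold (T b) *m Y^t*) =
  \tr (X *m unfold [ffun x => \sum_b T b x] *m Y^t*).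
Proof.
have -> : unfold [ffun x => \sum_b T b x] = \sum_b unfold (T b).
  by apply/matrixP => p q; rewrite summxE !mxE ffunE; apply: eq_bigr => b _; rewrite mxE.
by rewrite mulmx_sumr mulmx_suml raddf_sum.
Qed.

Lemma chaos_sum (n m : nat) (B : tensor C dims)
  (A : forall j : 'I_m, (j.+1).-tuple 'I_n -> tensor C dims) :
  [ffun x => \sum_beta chaos B A beta x] = [ffun x => \sum_(beta : {ffun 'I_n -> bool}) B x].
Proof.
apply/ffunP => x; rewrite !ffunE.
under eq_bigr do rewrite ffunE.
rewrite big_split /= [X in _ + X]exchange_big /= [X in _ + X]big1 ?addr0 // => j _.
rewrite exchange_big /= big1 // => t ht.
by rewrite -mulr_sumr zero_mean // mulr0.
Qed.
End S9.


End T7.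
Import T7.

Local Open Scope sesquilinear_scope.

Theorem lemma6 (C : numClosedFieldType) (N : nat) (dims : 'I_N -> nat)
  (n m k : nat)
  (A : forall j : 'I_m, (j.+1).-tuple 'I_n -> tensor C dims)
  (hA : forall (j : 'I_m) (t : (j.+1).-tuple 'I_n), hermitian_tensor (A j t)) :
  exists c : C, 0 < c /\
    forall B : tensor C dims, hermitian_tensor B ->
      c <= prob C [pred beta | tkyfan k B <= tkyfan k (chaos B A beta)].
Proof.
exists (1 / (2 ^ n)%:R); split; first by rewrite divr_gt0 ?ltr0n ?expn_gt0.
move=> B hB.
have hMB := spec_form (unfold_herm hB).
have [X [Y [gX gY hXY]]] := lower k (spectral_unitarymx (unfold B)) hMB.
pose G (T : tensor C dims) := 'Re (\tr (X *m unfold T *m Y^t*)).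
have hsum : \sum_beta G (chaos B A beta) = \sum_(beta : {ffun 'I_n -> bool}) G B.
  rewrite /G -!Re_sum; congr ('Re _).
  by rewrite (G_sum X Y (fun beta => chaos B A beta)) (G_sum X Y (fun _ => B)) chaos_sum.
have [beta0 hb0] : exists beta, G B <= G (chaos B A beta).
  case: (boolP [exists beta, G B <= G (chaos B A beta)]) => [/existsP // | /existsPn hn].
  exfalso; move/eqP: hsum; rewrite lt_eqF //.
  apply: ltr_sum; first by apply/hasP; exists [ffun => false]; rewrite ?mem_index_enum.
  by move=> beta _; have := hn beta; rewrite real_ltNge ?Creal_Re.
have hM0 := spec_form (unfold_herm (chaos_herm beta0 hB hA)).
have hup := upper gX gY (spectral_unitarymx _) hM0.
have key : tkyfan k B <= tkyfan k (chaos B A beta0).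
  exact: le_trans hXY (le_trans hb0 hup).
rewrite /prob; apply: ler_wpM2r; first by rewrite invr_ge0 ler0n.
by rewrite ler1n; apply/card_gt0P; exists beta0; rewrite inE.
Qed.
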